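(* If $f:[-1,1]\to\mathbb{R}$ is $5$-convex, then \[ \int_{-1}^1 f(x)\,dx\;\le\;\tfrac{2}{5}\cdot\tfrac13\bigl(f(-1)+4f(0)+f(1)\bigr)+\tfrac35\Bigl(f\bigl(-\tfrac{\sqrt3}{3}\bigr)+f\bigl(\tfrac{\sqrt3}{3}\bigr)\Bigr)\;\le\;\tfrac16\bigl(f(-1)+f(1)\bigr)+\tfrac56\Bigl(f\bigl(-\tfrac{\sqrt5}{5}\bigr)+f\bigl(\tfrac{\sqrt5}{5}\bigr)\Bigr). \]
   Context: Divided differences are defined recursively by $[x_1;f]:=f(x_1)$ and $[x_1,\dots,x_{m+1};f]:=\frac{[x_2,\dots,x_{m+1};f]-[x_1,\dots,x_m;f]}{x_{m+1}-x_1}$ for pairwise distinct points. For $m\in\mathbb{N}$, a function $f$ on an interval $I$ is called $m$-convex if $[x_1,\dots,x_{m+2};f]\ge 0$ for all pairwise distinct $x_1,\dots,x_{m+2}\in I$. Integrals are Riemann integrals (an $m$-convex function on a compact interval is Riemann integrable). *)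

(* Defs.v *)
From Stdlib Require Import Reals List.
From Coquelicot Require Import Coquelicot.
Open Scope R_scope.

(* Divided difference [x_1,...,x_k; f], defined by the recursion
   [x_1;f] = f x_1,
   [x_1..x_{m+1};f] = ([x_2..x_{m+1};f] - [x_1..x_m;f]) / (x_{m+1} - x_1). *)
Fixpoint divdiff_aux (n : nat) (f : R -> R) (xs : list R) : R :=
  match n with
  | O => match xs with x :: _ => f x | nil => 0 end
  | S n' =>
      match xs with
      | x1 :: rest =>
          (divdiff_aux n' f rest - divdiff_aux n' f (removelast xs))
            / (last xs 0 - x1)
      | nil => 0
      end
  end.

Definition divdiff (f : R -> R) (xs : list R) : R :=
  divdiff_aux (pred (length xs)) f xs.

Definition m_convex (m : nat) (Dom : R -> Prop) (f : R -> R) : Prop :=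
  forall xs : list R,
    length xs = (m + 2)%nat -> NoDup xs -> List.Forall Dom xs ->
    0 <= divdiff f xs.

(* Main.v *)
Require Import Defs.
From Stdlib Require Import Reals List Lra Lia Field Wf_nat Classical.
From Coquelicot Require Import Coquelicot.
Open Scope R_scope.


Fixpoint omega (xs : list R) (t : R) : R :=
  match xs with nil => 1 | x :: r => omega r t * (t - x) end.

Fixpoint NB (f : R -> R) (xs : list R) (t : R) : R :=
  match xs with nil => 0 | x :: r => NB f r t + omega r t * divdiff f (x :: r) end.

Fixpoint NFr (f : R -> R) (rxs : list R) (t : R) : R :=
  match rxs with nil => 0 | y :: r => NFr f r t + omega r t * divdiff f (rev (y :: r)) end.

Definition NF f xs t := NFr f (rev xs) t.

Lemma length_removelast_cons (x : R) r : length (removelast (x :: r)) = length r.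
Proof.
  revert x; induction r as [|y r IH]; intros x; [reflexivity|].
  transitivity (S (length (removelast (y :: r)))); [reflexivity|].
  rewrite IH. reflexivity.
Qed.

Lemma last_cons_ne (x : R) r : r <> nil -> last (x :: r) 0 = last r 0.
Proof. destruct r; [congruence|reflexivity]. Qed.

Lemma dd_cons f x r : r <> nil ->
  divdiff f (x :: r) = (divdiff f r - divdiff f (removelast (x :: r))) / (last r 0 - x).
Proof.
  intros Hr. unfold divdiff.
  rewrite length_removelast_cons.
  destruct r as [|y r']; [congruence|].
  simpl length. simpl pred.
  change (divdiff_aux (S (length r')) f (x :: y :: r')) with
    ((divdiff_aux (length r') f (y :: r') - divdiff_aux (length r') f (removelast (x :: y :: r')))
      / (last (x :: y :: r') 0 - x)).
  rewrite last_cons_ne by congruence. reflexivity.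
Qed.

Lemma dd_snoc f x m y :
  divdiff f (x :: m ++ y :: nil) = (divdiff f (m ++ y :: nil) - divdiff f (x :: m)) / (y - x).
Proof.
  rewrite dd_cons.
  - rewrite app_comm_cons, removelast_last, last_last. reflexivity.
  - destruct m; simpl; congruence.
Qed.

Lemma omega_app xs y t : omega (xs ++ y :: nil) t = omega xs t * (t - y).
Proof. induction xs as [|x r IH]; simpl; [ring|rewrite IH; ring]. Qed.

Lemma omega_rev xs t : omega (rev xs) t = omega xs t.
Proof. induction xs as [|x r IH]; simpl; [ring|rewrite omega_app, IH; ring]. Qed.

Lemma omega_in xs t : In t xs -> omega xs t = 0.
Proof. induction xs as [|x r IH]; simpl; [tauto|]. intros [->|H]; [ring|rewrite IH by auto; ring]. Qed.

Lemma omega_nin xs t : ~ In t xs -> omega xs t <> 0.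
Proof.
  induction xs as [|x r IH]; simpl; [lra|]. intros H.
  apply Rmult_integral_contrapositive_currified; [apply IH; tauto|].
  intro E. apply H. left. lra.
Qed.

Lemma NF_snoc f xs y t : NF f (xs ++ y :: nil) t = NF f xs t + omega xs t * divdiff f (xs ++ y :: nil).
Proof.
  unfold NF. rewrite rev_app_distr. simpl. rewrite omega_rev, rev_involutive. reflexivity.
Qed.

Lemma NF_nil f t : NF f nil t = 0. Proof. reflexivity. Qed.

Lemma newtonB f xs t : ~ In t xs -> f t = NB f xs t + omega xs t * divdiff f (xs ++ t :: nil).
Proof.
  induction xs as [|x r IH]; intros Hn.
  - simpl. unfold divdiff. simpl. ring.
  - simpl in Hn. rewrite IH by tauto. simpl.
    assert (Hx : t - x <> 0) by (intro; apply Hn; left; lra).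
    rewrite (dd_snoc f x r t). field. auto.
Qed.

Lemma newtonF f xs t : ~ In t xs -> f t = NF f xs t + omega xs t * divdiff f (t :: xs).
Proof.
  induction xs as [|y r IH] using rev_ind; intros Hn.
  - simpl. unfold divdiff. simpl. unfold NF. simpl. ring.
  - rewrite in_app_iff in Hn. simpl in Hn.
    rewrite IH by tauto. rewrite NF_snoc, omega_app.
    assert (Hy : y - t <> 0) by (intro; apply Hn; right; left; lra).
    rewrite (dd_snoc f t r y). field. auto.
Qed.

Lemma list_split2 (xs : list R) : (2 <= length xs)%nat ->
  exists x m y, xs = x :: m ++ y :: nil.
Proof.
  intros H. destruct xs as [|x r]; simpl in H; [lia|].
  destruct r as [|z r']; simpl in H; [lia|].
  destruct (exists_last (l:=z::r') ltac:(congruence)) as [m [y E]].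
  exists x, m, y. rewrite E. reflexivity.
Qed.

Lemma NB_NF f xs t : NoDup xs -> NB f xs t = NF f xs t.
Proof.
  remember (length xs) as n eqn:En. revert xs En.
  induction n as [n IH] using lt_wf_ind. intros xs En Hnd.
  destruct (Nat.lt_ge_cases n 2) as [Hl|Hg].
  - destruct xs as [|x [|z r]]; simpl in En; try lia.
    + reflexivity.
    + unfold NF. simpl. ring.
  - destruct (list_split2 xs) as [x [m [y E]]]; [lia|]. subst xs.
    assert (Hxy : y - x <> 0).
    { intro. apply NoDup_cons_iff in Hnd. destruct Hnd as [Hn _]. apply Hn.
      apply in_or_app. right. left. lra. }
    assert (Hnd1 : NoDup (m ++ y :: nil)) by (inversion Hnd; auto).
    assert (Hnd2 : NoDup (x :: m)).
    { rewrite app_comm_cons in Hnd. apply NoDup_app_remove_r in Hnd. exact Hnd. }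
    assert (Hnd3 : NoDup m) by (inversion Hnd2; auto).
    simpl length in En. rewrite length_app in En. simpl in En.
    assert (I1 : NB f (m ++ y :: nil) t = NF f (m ++ y :: nil) t)
      by (apply (IH (length (m ++ y :: nil))); [rewrite length_app; simpl; lia|reflexivity|auto]).
    assert (I2 : NB f (x :: m) t = NF f (x :: m) t)
      by (apply (IH (length (x :: m))); [simpl; lia|reflexivity|auto]).
    assert (I3 : NB f m t = NF f m t)
      by (apply (IH (length m)); [lia|reflexivity|auto]).
    rewrite app_comm_cons, NF_snoc. rewrite <- app_comm_cons.
    change (NB f (x :: m ++ y :: nil) t) with
      (NB f (m ++ y :: nil) t + omega (m ++ y :: nil) t * divdiff f (x :: m ++ y :: nil)).
    rewrite I1, NF_snoc, <- I2, <- I3. cbn [NB omega]. rewrite omega_app.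
    rewrite (dd_snoc f x m y). field. auto.
Qed.

Lemma NF_first f x r : NF f (x :: r) x = f x.
Proof.
  induction r as [|z r IH] using rev_ind.
  - unfold NF. simpl. unfold divdiff. simpl. ring.
  - rewrite app_comm_cons, NF_snoc, IH. cbn [omega]. replace (x - x) with 0 by ring. ring.
Qed.

Lemma NB_interp f xs y : NoDup xs -> In y xs -> NB f xs y = f y.
Proof.
  induction xs as [|x r IH]; intros Hnd Hin; [destruct Hin|].
  destruct Hin as [<-|Hin].
  - rewrite NB_NF by auto. apply NF_first.
  - simpl. rewrite omega_in by auto. inversion Hnd. rewrite IH by auto. ring.
Qed.

Lemma dd_sym f xs t : NoDup xs -> ~ In t xs ->
  divdiff f (t :: xs) = divdiff f (xs ++ t :: nil).
Proof.
  intros Hnd Hn.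
  pose proof (newtonB f xs t Hn) as HB. pose proof (newtonF f xs t Hn) as HF.
  rewrite <- NB_NF in HF by auto.
  pose proof (omega_nin xs t Hn).
  apply (Rmult_eq_reg_l (omega xs t)); auto. lra.
Qed.

Lemma omega_cont xs t : continuous (omega xs) t.
Proof.
  induction xs as [|x r IH]; simpl.
  - apply continuous_const.
  - apply (continuous_mult (omega r) (fun t => t - x)); auto.
    apply (continuous_minus (fun t => t) (fun _ => x)); [apply continuous_id|apply continuous_const].
Qed.

Lemma NB_cont f xs t : continuous (NB f xs) t.
Proof.
  induction xs as [|x r IH]; simpl.
  - apply continuous_const.
  - apply (continuous_plus (NB f r) (fun t => omega r t * divdiff f (x :: r))); auto.
    apply (continuous_mult (omega r) (fun _ => divdiff f (x :: r))); [apply omega_cont|apply continuous_const].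
Qed.


Ltac nodup_tac := repeat (constructor; [simpl; intuition lra|]); constructor.
Ltac forall_tac := repeat (constructor; [simpl; lra|]); constructor.

Lemma conv7 f xs : m_convex 5 (fun x => -1 <= x <= 1) f ->
  length xs = 7%nat -> NoDup xs -> List.Forall (fun x => -1 <= x <= 1) xs -> 0 <= divdiff f xs.
Proof. intros H; apply H. Qed.

Lemma between_abs x u v c e : (x - u) * (x - v) <= 0 -> Rabs (u - c) < e -> Rabs (v - c) < e ->
  Rabs (x - c) < e.
Proof.
  intros H Hu Hv. apply Rabs_def2 in Hu. apply Rabs_def2 in Hv. apply Rabs_def1.
  - destruct (Rle_dec u v); nra.
  - destruct (Rle_dec u v); nra.
Qed.

Lemma mul_nonpos a b : 0 <= a -> b <= 0 -> a * b <= 0.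
Proof. intros; nra. Qed.

Lemma ball_R (x e y : R) : ball x e y <-> Rabs (y - x) < e.
Proof. reflexivity. Qed.

Lemma cont_int f : m_convex 5 (fun x => -1 <= x <= 1) f ->
  forall t0, -1 < t0 < 1 -> continuous f t0.
Proof.
  intros Hc t0 Ht0.
  set (h := Rmin (1 - t0) (1 + t0) / 3).
  assert (Hh : 0 < h) by (unfold h; apply Rmin_case; lra).
  assert (Hh1 : 3 * h <= 1 - t0) by (unfold h; pose proof (Rmin_l (1-t0) (1+t0)); lra).
  assert (Hh2 : 3 * h <= 1 + t0) by (unfold h; pose proof (Rmin_r (1-t0) (1+t0)); lra).
  set (L1 := (t0-3*h) :: (t0-2*h) :: (t0-h) :: (t0+2*h) :: (t0+3*h) :: t0 :: nil).
  set (L2 := (t0-3*h) :: (t0-2*h) :: (t0+h) :: (t0+2*h) :: (t0+3*h) :: t0 :: nil).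
  assert (N1 : NoDup L1) by (unfold L1; nodup_tac).
  assert (N2 : NoDup L2) by (unfold L2; nodup_tac).
  assert (E1 : NB f L1 t0 = f t0) by (apply NB_interp; auto; unfold L1; simpl; tauto).
  assert (E2 : NB f L2 t0 = f t0) by (apply NB_interp; auto; unfold L2; simpl; tauto).
  apply filterlim_locally. intros eps.
  pose proof (proj1 (filterlim_locally _ _) (NB_cont f L1 t0) eps) as C1.
  pose proof (proj1 (filterlim_locally _ _) (NB_cont f L2 t0) eps) as C2.
  assert (C3 : locally t0 (fun t => Rabs (t - t0) < h)).
  { exists (mkposreal h Hh). intros y Hy. exact Hy. }
  generalize (filter_and _ _ (filter_and _ _ C1 C2) C3).
  apply filter_imp. intros t [[B1 B2] B3]. change R in t.
  rewrite ball_R in B1, B2 |- *. rewrite E1 in B1. rewrite E2 in B2.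
  destruct (Req_dec t t0) as [->|Hne].
  { replace (f t0 - f t0) with 0 by ring. rewrite Rabs_R0. apply cond_pos. }
  apply Rabs_def2 in B3.
  assert (nL1 : ~ In t L1) by (unfold L1; simpl; intuition lra).
  assert (nL2 : ~ In t L2) by (unfold L2; simpl; intuition lra).
  pose proof (newtonB f L1 t nL1) as F1.
  pose proof (newtonB f L2 t nL2) as F2.
  assert (D1 : 0 <= divdiff f (L1 ++ t :: nil)).
  { apply conv7; auto. apply NoDup_app; auto. nodup_tac. unfold L1; simpl. intuition lra.
    unfold L1; simpl; forall_tac. }
  assert (D2 : 0 <= divdiff f (L2 ++ t :: nil)).
  { apply conv7; auto. apply NoDup_app; auto. nodup_tac. unfold L2; simpl. intuition lra.
    unfold L2; simpl; forall_tac. }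
  assert (W : omega L1 t * omega L2 t <= 0).
  { set (u := t - t0).
    set (S := u * (u - 3*h) * (u - 2*h) * (u + 2*h) * (u + 3*h)).
    assert (Eq : omega L1 t * omega L2 t = (S * S) * ((u + h) * (u - h)))
      by (unfold L1, L2, S, u; simpl; ring).
    rewrite Eq. apply mul_nonpos. apply Rle_0_sqr.
    assert ((u + h) * (u - h) < 0) by (unfold u; nra). lra. }
  assert (Hprod : (f t - NB f L1 t) * (f t - NB f L2 t) <= 0).
  { assert (X1 : f t - NB f L1 t = omega L1 t * divdiff f (L1 ++ t :: nil)) by lra.
    assert (X2 : f t - NB f L2 t = omega L2 t * divdiff f (L2 ++ t :: nil)) by lra.
    rewrite X1, X2.
    replace (omega L1 t * divdiff f (L1 ++ t :: nil) * (omega L2 t * divdiff f (L2 ++ t :: nil)))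
     with ((omega L1 t * omega L2 t) * (divdiff f (L1 ++ t :: nil) * divdiff f (L2 ++ t :: nil))) by ring.
    rewrite Rmult_comm. apply mul_nonpos; auto. apply Rmult_le_pos; auto. }
  exact (between_abs (f t) (NB f L1 t) (NB f L2 t) _ _ Hprod B1 B2).
Qed.


Lemma mono_left (G : R -> R) c z M : c < z ->
  (forall s t, c < s -> s < t -> t < z -> G s <= G t) ->
  (forall t, c < t < z -> G t <= M) ->
  exists L, filterlim G (at_left z) (locally L).
Proof.
  intros Hcz Hm Hb.
  set (E := fun y => exists t, c < t < z /\ y = G t).
  destruct (completeness E) as [L [HL1 HL2]].
  { exists M. intros y [t [Ht ->]]. auto. }
  { exists (G ((c+z)/2)). exists ((c+z)/2). split; [lra|reflexivity]. }
  exists L. apply filterlim_locally. intros eps.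
  assert (Hex : exists t1, c < t1 < z /\ L - eps < G t1).
  { apply NNPP. intro Hn.
    assert (Hub : is_upper_bound E (L - eps)).
    { intros y [t [Ht ->]]. apply Rnot_lt_le. intro Hlt. apply Hn. exists t. auto. }
    specialize (HL2 _ Hub). pose proof (cond_pos eps). lra. }
  destruct Hex as [t1 [Ht1 Hg1]].
  assert (Hd : 0 < z - t1) by lra.
  exists (mkposreal _ Hd). intros t Ht Htz. rewrite ball_R in Ht |- *. simpl in Ht.
  apply Rabs_def2 in Ht.
  assert (t1 < t) by lra.
  assert (G t1 <= G t) by (apply Hm; lra).
  assert (G t <= L) by (apply HL1; exists t; split; [lra|reflexivity]).
  apply Rabs_def1; lra.
Qed.

Lemma mono_right (G : R -> R) c z m : z < c ->
  (forall s t, z < s -> s < t -> t < c -> G s <= G t) ->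
  (forall t, z < t < c -> m <= G t) ->
  exists L, filterlim G (at_right z) (locally L).
Proof.
  intros Hcz Hm Hb.
  assert (A1 : forall s t, -c < s -> s < t -> t < -z -> - G (- s) <= - G (- t)).
  { intros s t Hs Hst Ht. assert (G (-t) <= G (-s)) by (apply Hm; lra). lra. }
  assert (A2 : forall t, -c < t < -z -> - G (- t) <= - m).
  { intros t Ht. assert (m <= G (-t)) by (apply Hb; lra). lra. }
  destruct (mono_left (fun u => - G (- u)) (-c) (-z) (-m) ltac:(lra) A1 A2) as [L HL].
  exists (-L). apply filterlim_locally. intros eps.
  destruct (proj1 (filterlim_locally _ _) HL eps) as [d Hd].
  exists d. intros t Ht Htz. change R in t. rewrite ball_R in Ht |- *.
  assert (H1 : ball (-z) d (-t)) by (rewrite ball_R;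
    replace (-t - -z) with (-(t - z)) by ring; rewrite Rabs_Ropp; auto).
  specialize (Hd (-t) H1 ltac:(lra)). rewrite ball_R in Hd.
  replace (- - t) with t in Hd by ring.
  replace (G t - - L) with (- (- G t - L)) by ring. rewrite Rabs_Ropp. auto.
Qed.

Lemma comb_lim (F : (R -> Prop) -> Prop) {FF : Filter F} P W G p w g :
  filterlim P F (locally p) -> filterlim W F (locally w) -> filterlim G F (locally g) ->
  filterlim (fun t => P t + W t * G t) F (locally (p + w * g)).
Proof.
  intros HP HW HG.
  apply (filterlim_comp_2 (F:=F) (G:=locally p) (H:=locally (w*g)) P (fun t => W t * G t) Rplus HP).
  - apply (filterlim_comp_2 (F:=F) (G:=locally w) (H:=locally g) W G Rmult HW HG).
    apply (filterlim_mult (K:=R_AbsRing) w g).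
  - apply (filterlim_plus (V:=R_NormedModule) p (w * g)).
Qed.

Lemma mono_dd f ys s t : m_convex 5 (fun x => -1 <= x <= 1) f ->
  length ys = 5%nat -> NoDup ys -> List.Forall (fun x => -1 <= x <= 1) ys ->
  -1 <= s -> s < t -> t <= 1 -> ~ In s ys -> ~ In t ys ->
  divdiff f (ys ++ s :: nil) <= divdiff f (ys ++ t :: nil).
Proof.
  intros Hc Hl Hnd Hf Hs Hst Ht Hns Hnt.
  assert (H0 : 0 <= divdiff f (s :: ys ++ t :: nil)).
  { apply conv7; auto.
    - simpl. rewrite length_app, Hl. reflexivity.
    - constructor. rewrite in_app_iff. simpl. intuition lra.
      apply NoDup_app; auto. nodup_tac. intros a Ha Hb. simpl in Hb. destruct Hb as [E|[]]. subst. auto.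
    - constructor. lra. apply Forall_app. split; auto. constructor; [lra|constructor]. }
  rewrite dd_snoc, dd_sym in H0 by auto.
  assert (0 < t - s) by lra.
  apply Rmult_le_compat_r with (r := t - s) in H0; [|lra].
  unfold Rdiv in H0. rewrite Rmult_0_l, Rmult_assoc, Rinv_l, Rmult_1_r in H0 by lra. lra.
Qed.


Definition ys0 := (-1/2) :: (-1/4) :: 0 :: (1/4) :: (1/2) :: nil.

Lemma ys0_props : length ys0 = 5%nat /\ NoDup ys0 /\ List.Forall (fun x => -1 <= x <= 1) ys0.
Proof. unfold ys0. split; [reflexivity|split]; [nodup_tac|forall_tac]. Qed.

Lemma ys0_nin t : (1/2 < t \/ t < -1/2) -> ~ In t ys0.
Proof. unfold ys0; simpl; intuition lra. Qed.

Lemma cont_left (g : R -> R) z : continuous g z -> filterlim g (at_left z) (locally (g z)).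
Proof.
  intros H P HP. specialize (H P HP). unfold filtermap, at_left, within in *.
  eapply filter_imp; [|exact H]. simpl. auto.
Qed.

Lemma cont_right (g : R -> R) z : continuous g z -> filterlim g (at_right z) (locally (g z)).
Proof.
  intros H P HP. specialize (H P HP). unfold filtermap, at_right, within in *.
  eapply filter_imp; [|exact H]. simpl. auto.
Qed.

Lemma f_int f : m_convex 5 (fun x => -1 <= x <= 1) f -> ex_RInt f (-1) 1.
Proof.
  intros Hc. destruct ys0_props as [Hl [Hnd Hf]].
  set (G := fun t => divdiff f (ys0 ++ t :: nil)).
  assert (Hmono : forall s t, -1 <= s -> s < t -> t <= 1 -> (1/2 < s \/ s < -1/2) ->
     (1/2 < t \/ t < -1/2) -> G s <= G t).
  { intros s t H1 H2 H3 H4 H5. apply mono_dd; auto; apply ys0_nin; auto. }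
  destruct (mono_left G (1/2) 1 (G 1)) as [Lg HLg]; [lra| | |].
  { intros s t H1 H2 H3. apply Hmono; lra. }
  { intros t Ht. apply Hmono; lra. }
  destruct (mono_right G (-1/2) (-1) (G (-1))) as [Mg HMg]; [lra| | |].
  { intros s t H1 H2 H3. apply Hmono; lra. }
  { intros t Ht. apply Hmono; lra. }
  set (Lp := NB f ys0 1 + omega ys0 1 * Lg).
  set (Lm := NB f ys0 (-1) + omega ys0 (-1) * Mg).
  assert (HLp : filterlim f (at_left 1) (locally Lp)).
  { refine (filterlim_ext_loc (fun t => NB f ys0 t + omega ys0 t * G t) f _ _).
    - assert (Hh : 0 < 1/2) by lra. exists (mkposreal _ Hh). intros t Ht Ht1.
      change R in t. rewrite ball_R in Ht. simpl in Ht. apply Rabs_def2 in Ht.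
      unfold G. symmetry. apply newtonB. apply ys0_nin. lra.
    - refine (@comb_lim (at_left 1) _ _ _ _ _ _ _ _ _ HLg); [apply cont_left, NB_cont | apply cont_left, omega_cont]. }
  assert (HLm : filterlim f (at_right (-1)) (locally Lm)).
  { refine (filterlim_ext_loc (fun t => NB f ys0 t + omega ys0 t * G t) f _ _).
    - assert (Hh : 0 < 1/2) by lra. exists (mkposreal _ Hh). intros t Ht Ht1.
      change R in t. rewrite ball_R in Ht. simpl in Ht. apply Rabs_def2 in Ht.
      unfold G. symmetry. apply newtonB. apply ys0_nin. lra.
    - refine (@comb_lim (at_right (-1)) _ _ _ _ _ _ _ _ _ HMg); [apply cont_right, NB_cont | apply cont_right, omega_cont]. }
  set (Fe := fun t => if Rle_dec 1 t then Lp else if Rle_dec t (-1) then Lm else f t).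
  apply (ex_RInt_ext Fe f).
  { rewrite Rmin_left, Rmax_right by lra. intros x Hx. unfold Fe.
    destruct (Rle_dec 1 x); [lra|]. destruct (Rle_dec x (-1)); [lra|]. reflexivity. }
  apply (@ex_RInt_continuous R_CompleteNormedModule). rewrite Rmin_left, Rmax_right by lra.
  intros z Hz.
  destruct (Req_dec z 1) as [->|Hz1]; [|destruct (Req_dec z (-1)) as [->|Hz2]].
  - apply filterlim_locally. intros eps.
    destruct (proj1 (filterlim_locally _ _) HLp eps) as [d Hd].
    assert (Hd' : 0 < Rmin d 1) by (apply Rmin_case; [apply cond_pos|lra]).
    exists (mkposreal _ Hd'). intros y Hy. change R in y. rewrite ball_R in Hy. simpl in Hy.
    unfold Fe. destruct (Rle_dec 1 1); [|lra].
    destruct (Rle_dec 1 y). { apply ball_center. }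
    destruct (Rle_dec y (-1)). { apply Rabs_def2 in Hy. pose proof (Rmin_r d 1). lra. }
    apply Hd; [|lra]. rewrite ball_R. pose proof (Rmin_l d 1). lra.
  - apply filterlim_locally. intros eps.
    destruct (proj1 (filterlim_locally _ _) HLm eps) as [d Hd].
    assert (Hd' : 0 < Rmin d 1) by (apply Rmin_case; [apply cond_pos|lra]).
    exists (mkposreal _ Hd'). intros y Hy. change R in y. rewrite ball_R in Hy. simpl in Hy.
    unfold Fe. destruct (Rle_dec 1 (-1)); [lra|]. destruct (Rle_dec (-1) (-1)); [|lra].
    destruct (Rle_dec 1 y). { apply Rabs_def2 in Hy. pose proof (Rmin_r d 1). lra. }
    destruct (Rle_dec y (-1)). { apply ball_center. }
    apply Hd; [|lra]. rewrite ball_R. pose proof (Rmin_l d 1). lra.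
  - assert (Hzi : -1 < z < 1) by lra.
    apply (continuous_ext_loc Fe f).
    + set (e := Rmin (1 - z) (z + 1)).
      assert (He : 0 < e) by (unfold e; apply Rmin_case; lra).
      exists (mkposreal _ He). intros y Hy. change R in y. rewrite ball_R in Hy. simpl in Hy.
      apply Rabs_def2 in Hy. pose proof (Rmin_l (1-z) (z+1)). pose proof (Rmin_r (1-z) (z+1)).
      unfold Fe. destruct (Rle_dec 1 y); [unfold e in *; lra|].
      destruct (Rle_dec y (-1)); [unfold e in *; lra|]. reflexivity.
    + apply cont_int; auto.
Qed.


Definition pol (e0 e1 e2 e3 e4 e5 t : R) := e0 + e1*t + e2*t^2 + e3*t^3 + e4*t^4 + e5*t^5.
Definition prim (e0 e1 e2 e3 e4 e5 t : R) :=
  e0*t + e1*t^2/2 + e2*t^3/3 + e3*t^4/4 + e4*t^5/5 + e5*t^6/6.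

Lemma pol_cont e0 e1 e2 e3 e4 e5 x : continuous (pol e0 e1 e2 e3 e4 e5) x.
Proof.
  apply continuity_pt_filterlim. unfold pol. repeat first
   [ apply continuity_pt_plus | apply continuity_pt_mult | apply continuity_pt_const; intros ??; reflexivity
   | apply continuity_pt_id | apply derivable_continuous_pt; apply derivable_pt_pow ].
Qed.

Lemma RInt_pol e0 e1 e2 e3 e4 e5 u v :
  RInt (pol e0 e1 e2 e3 e4 e5) u v = prim e0 e1 e2 e3 e4 e5 v - prim e0 e1 e2 e3 e4 e5 u.
Proof.
  apply is_RInt_unique.
  apply (is_RInt_derive (prim e0 e1 e2 e3 e4 e5)).
  - intros x _. unfold prim, pol. auto_derive; [exact I|field].
  - intros x _. apply pol_cont.
Qed.

Lemma ex_RInt_pol e0 e1 e2 e3 e4 e5 u v : ex_RInt (pol e0 e1 e2 e3 e4 e5) u v.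
Proof. apply (@ex_RInt_continuous R_CompleteNormedModule). intros; apply pol_cont. Qed.


Definition PU e0 e1 e2 e3 e4 c := pol e0 (e1 + c/15) e2 (e3 - 8*c/15) e4 c.
Definition PR e0 e1 e2 e3 e4 c := prim e0 (e1 + c/15) e2 (e3 - 8*c/15) e4 c.



Lemma alg1 a b D1 D2 D3 D4 D5 A K e0 e1 e2 e3 e4 :
  a*a = 1/5 -> b*b = 1/3 ->
  e0 = D5 - b*D4 + a*b*D3 ->
  e1 = D4 - (a+b)*D3 + a*b*D2 + a*a*b*D1 ->
  e2 = D3 - (a+b)*D2 - a*a*D1 ->
  e3 = D2 - b*D1 -> e4 = D1 ->
  let P1 := PR e0 e1 e2 e3 e4 A in
  let P2 := PR e0 e1 e2 e3 e4 (A + 2*K) in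
  let Bt := pol e0 e1 e2 e3 e4 0 in
  2/5*(1/3*((Bt (-1) - 8/15*A) + 4 * Bt 0 + (Bt 1 + 8/15*(A+2*K)))) + 3/5*(Bt (-b) + Bt b)
  - ((P1 (-b) - P1 (-1)) + (P2 (-a) - P2 (-b)) + (P1 0 - P1 (-a))
           + (P2 a - P2 0) + (P1 b - P1 a) + (P2 1 - P2 b))
  = 82/10125 * K.
Proof.
  intros Ha Hb -> -> -> -> ->. intros. subst P1 P2 Bt. unfold PR, prim, pol.
  assert (a2 : a^2 = 1/5) by (replace (a^2) with (a*a) by ring; rewrite Ha; field).
  assert (a3 : a^3 = a*(1/5)) by (replace (a^3) with (a*(a*a)) by ring; rewrite Ha; field).
  assert (a4 : a^4 = (1/5)*(1/5)) by (replace (a^4) with ((a*a)*(a*a)) by ring; rewrite Ha; field).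
  assert (a5 : a^5 = a*((1/5)*(1/5))) by (replace (a^5) with (a*((a*a)*(a*a))) by ring; rewrite Ha; field).
  assert (a6 : a^6 = (1/5)*(1/5)*(1/5)) by (replace (a^6) with ((a*a)*(a*a)*(a*a)) by ring; rewrite Ha; field).
  assert (a7 : a^7 = a*((1/5)*(1/5)*(1/5))) by (replace (a^7) with (a*((a*a)*(a*a)*(a*a))) by ring; rewrite Ha; field).
  assert (b2 : b^2 = 1/3) by (replace (b^2) with (b*b) by ring; rewrite Hb; field).
  assert (b3 : b^3 = b*(1/3)) by (replace (b^3) with (b*(b*b)) by ring; rewrite Hb; field).
  assert (b4 : b^4 = (1/3)*(1/3)) by (replace (b^4) with ((b*b)*(b*b)) by ring; rewrite Hb; field).
  assert (b5 : b^5 = b*((1/3)*(1/3))) by (replace (b^5) with (b*((b*b)*(b*b))) by ring; rewrite Hb; field).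
  assert (b6 : b^6 = (1/3)*(1/3)*(1/3)) by (replace (b^6) with ((b*b)*(b*b)*(b*b)) by ring; rewrite Hb; field).
  assert (b7 : b^7 = b*((1/3)*(1/3)*(1/3))) by (replace (b^7) with (b*((b*b)*(b*b)*(b*b))) by ring; rewrite Hb; field).
  unfold Rdiv. ring_simplify. rewrite ?a2, ?a3, ?a4, ?a5, ?a6, ?a7, ?b2, ?b3, ?b4, ?b5, ?b6, ?b7. field.
Qed.

Lemma alg2 a b D1 D2 D3 D4 D5 A K e0 e1 e2 e3 e4 :
  a*a = 1/5 -> b*b = 1/3 ->
  e0 = D5 - b*D4 + a*b*D3 ->
  e1 = D4 - (a+b)*D3 + a*b*D2 + a*a*b*D1 ->
  e2 = D3 - (a+b)*D2 - a*a*D1 ->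
  e3 = D2 - b*D1 -> e4 = D1 ->
  let Bt := pol e0 e1 e2 e3 e4 0 in
  1/6*((Bt (-1) - 8/15*A) + (Bt 1 + 8/15*(A+2*K))) + 5/6*(Bt (-a) + Bt a)
  - (2/5*(1/3*((Bt (-1) - 8/15*A) + 4 * Bt 0 + (Bt 1 + 8/15*(A+2*K)))) + 3/5*(Bt (-b) + Bt b))
  = 8/225 * K.
Proof.
  intros Ha Hb -> -> -> -> ->. intros. subst Bt. unfold pol.
  assert (a2 : a^2 = 1/5) by (replace (a^2) with (a*a) by ring; rewrite Ha; field).
  assert (a3 : a^3 = a*(1/5)) by (replace (a^3) with (a*(a*a)) by ring; rewrite Ha; field).
  assert (a4 : a^4 = (1/5)*(1/5)) by (replace (a^4) with ((a*a)*(a*a)) by ring; rewrite Ha; field).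
  assert (a5 : a^5 = a*((1/5)*(1/5))) by (replace (a^5) with (a*((a*a)*(a*a))) by ring; rewrite Ha; field).
  assert (b2 : b^2 = 1/3) by (replace (b^2) with (b*b) by ring; rewrite Hb; field).
  assert (b3 : b^3 = b*(1/3)) by (replace (b^3) with (b*(b*b)) by ring; rewrite Hb; field).
  assert (b4 : b^4 = (1/3)*(1/3)) by (replace (b^4) with ((b*b)*(b*b)) by ring; rewrite Hb; field).
  assert (b5 : b^5 = b*((1/3)*(1/3))) by (replace (b^5) with (b*((b*b)*(b*b))) by ring; rewrite Hb; field).
  unfold Rdiv. ring_simplify. rewrite ?a2, ?a3, ?a4, ?a5, ?b2, ?b3, ?b4, ?b5. field.
Qed.


Lemma RInt_PU e0 e1 e2 e3 e4 c u v :
  RInt (PU e0 e1 e2 e3 e4 c) u v = PR e0 e1 e2 e3 e4 c v - PR e0 e1 e2 e3 e4 c u.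
Proof. apply RInt_pol. Qed.

Lemma mpp x y : 0 < x -> 0 < y -> 0 < x * y. Proof. intros; nra. Qed.
Lemma mpn x y : 0 < x -> y < 0 -> x * y < 0. Proof. intros; nra. Qed.
Lemma mnp x y : x < 0 -> 0 < y -> x * y < 0. Proof. intros; nra. Qed.
Lemma mnn x y : x < 0 -> y < 0 -> 0 < x * y. Proof. intros; nra. Qed.

Ltac sg := match goal with
  | |- 0 < ?x * ?y => first [apply mpp; sg | apply mnn; sg]
  | |- ?x * ?y < 0 => first [apply mpn; sg | apply mnp; sg]
  | _ => lra end.

Lemma piece_le f p q U : p <= q -> ex_RInt f p q -> ex_RInt U p q ->
  (forall t, p < t < q -> f t <= U t) -> RInt f p q <= RInt U p q.
Proof. intros. apply RInt_le; auto. Qed.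

Lemma chas (f : R -> R) p q r : ex_RInt f p q -> ex_RInt f q r -> RInt f p r = RInt f p q + RInt f q r.
Proof. intros H1 H2. rewrite <- (RInt_Chasles f p q r H1 H2). reflexivity. Qed.

Lemma sub_int (f : R -> R) p q : ex_RInt f (-1) 1 -> -1 <= p -> p <= q -> q <= 1 -> ex_RInt f p q.
Proof.
  intros H H1 H2 H3.
  apply (ex_RInt_Chasles_2 f (-1)); [lra|].
  apply (ex_RInt_Chasles_1 f (-1) q 1); [lra|auto].
Qed.

Theorem main f : m_convex 5 (fun x => -1 <= x <= 1) f ->
  RInt f (-1) 1 <=
    2 / 5 * (1 / 3 * (f (-1) + 4 * f 0 + f 1))
    + 3 / 5 * (f (- (sqrt 3 / 3)) + f (sqrt 3 / 3))
  /\
  2 / 5 * (1 / 3 * (f (-1) + 4 * f 0 + f 1))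
    + 3 / 5 * (f (- (sqrt 3 / 3)) + f (sqrt 3 / 3))
  <= 1 / 6 * (f (-1) + f 1)
     + 5 / 6 * (f (- (sqrt 5 / 5)) + f (sqrt 5 / 5)).
Proof.
  intros Hc.
  set (a := sqrt 5 / 5). set (b := sqrt 3 / 3).
  assert (Ha : a * a = 1/5).
  { unfold a. replace (sqrt 5 / 5 * (sqrt 5 / 5)) with (sqrt 5 * sqrt 5 / 25) by field.
    rewrite sqrt_sqrt by lra. field. }
  assert (Hb : b * b = 1/3).
  { unfold b. replace (sqrt 3 / 3 * (sqrt 3 / 3)) with (sqrt 3 * sqrt 3 / 9) by field.
    rewrite sqrt_sqrt by lra. field. }
  assert (Ha0 : 0 < a) by (unfold a; apply Rdiv_lt_0_compat; [apply sqrt_lt_R0|]; lra).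
  assert (Hb0 : 0 < b) by (unfold b; apply Rdiv_lt_0_compat; [apply sqrt_lt_R0|]; lra).
  assert (Hab : a < b) by nra.
  assert (Hb1 : b < 1) by nra.
  set (C := (-b) :: (-a) :: 0 :: a :: b :: nil).
  assert (HC : NoDup C) by (unfold C; nodup_tac).
  set (A := divdiff f (-1 :: C)).
  set (K := divdiff f (-1 :: C ++ 1 :: nil)).
  assert (HK : 0 <= K).
  { apply conv7; auto. unfold C; nodup_tac. unfold C; simpl; forall_tac. }
  assert (HAK : divdiff f (C ++ 1 :: nil) = A + 2 * K).
  { unfold K. rewrite dd_snoc. fold A. field. }
  set (D1 := divdiff f C).
  set (D2 := divdiff f ((-a) :: 0 :: a :: b :: nil)).
  set (D3 := divdiff f (0 :: a :: b :: nil)).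
  set (D4 := divdiff f (a :: b :: nil)).
  set (D5 := divdiff f (b :: nil)).
  set (e0 := D5 - b*D4 + a*b*D3).
  set (e1 := D4 - (a+b)*D3 + a*b*D2 + a*a*b*D1).
  set (e2 := D3 - (a+b)*D2 - a*a*D1).
  set (e3 := D2 - b*D1).
  set (e4 := D1).
  assert (HB : forall t, NB f C t = pol e0 e1 e2 e3 e4 0 t).
  { intros t. unfold C. cbn [NB omega]. fold C. fold D1.
    unfold pol, e0, e1, e2, e3, e4, D2, D3, D4, D5. ring. }
  assert (HWf : forall t, omega C t = t * ((t+a)*(t-a)) * ((t+b)*(t-b))).
  { intros t. unfold C. cbn [omega]. ring. }
  assert (HW : forall t, omega C t = t^5 - 8/15*t^3 + 1/15*t).
  { intros t. rewrite HWf.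
    replace ((t+a)*(t-a)) with (t*t - a*a) by ring. replace ((t+b)*(t-b)) with (t*t - b*b) by ring.
    rewrite Ha, Hb. field. }
  assert (UX : forall t, -1 < t < 1 -> ~ In t C -> omega C t * (t + 1) < 0 ->
            f t <= PU e0 e1 e2 e3 e4 A t).
  { intros t Ht Hn Hs.
    assert (Hn' : ~ In t (-1 :: C)) by (simpl; intros [E|E]; [lra|auto]).
    pose proof (newtonB f (-1 :: C) t Hn') as E.
    assert (D : 0 <= divdiff f ((-1 :: C) ++ t :: nil)).
    { apply conv7; auto. apply NoDup_app; auto. unfold C; nodup_tac. nodup_tac.
      intros y Hy1 Hy2. simpl in Hy2. destruct Hy2 as [<-|[]]. auto.
      unfold C; simpl; forall_tac. }
    change (NB f (-1 :: C) t) with (NB f C t + omega C t * divdiff f (-1 :: C)) in E.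
    change (omega (-1 :: C) t) with (omega C t * (t - -1)) in E.
    fold A in E. rewrite HB in E.
    assert (omega C t * (t - -1) * divdiff f ((-1 :: C) ++ t :: nil) <= 0).
    { replace (t - -1) with (t + 1) by ring. rewrite Rmult_comm. apply mul_nonpos; lra. }
    assert (EP : PU e0 e1 e2 e3 e4 A t = pol e0 e1 e2 e3 e4 0 t + omega C t * A)
      by (rewrite HW; unfold PU, pol; field).
    rewrite EP. lra. }
  assert (UY : forall t, -1 < t < 1 -> ~ In t C -> omega C t * (t - 1) < 0 ->
            f t <= PU e0 e1 e2 e3 e4 (A + 2*K) t).
  { intros t Ht Hn Hs.
    assert (Hn' : ~ In t (C ++ 1 :: nil)) by (rewrite in_app_iff; simpl; intros [E|[E|E]]; auto; lra).
    pose proof (newtonF f (C ++ 1 :: nil) t Hn') as E.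
    assert (D : 0 <= divdiff f (t :: C ++ 1 :: nil)).
    { apply conv7; auto. constructor. auto. apply NoDup_app; auto. nodup_tac.
      intros y Hy1 Hy2. simpl in Hy2. destruct Hy2 as [<-|[]]. unfold C in Hy1; simpl in Hy1; intuition lra.
      unfold C; simpl; forall_tac. }
    rewrite NF_snoc, <- NB_NF, omega_app, HAK, HB in E by auto.
    assert (omega C t * (t - 1) * divdiff f (t :: C ++ 1 :: nil) <= 0).
    { rewrite Rmult_comm. apply mul_nonpos; lra. }
    assert (EP : PU e0 e1 e2 e3 e4 (A + 2*K) t = pol e0 e1 e2 e3 e4 0 t + omega C t * (A + 2*K))
      by (rewrite HW; unfold PU, pol; field).
    rewrite EP. lra. }
  pose proof (f_int f Hc) as Hf.
  assert (Hn : forall t, ~ In t C <-> (t <> -b /\ t <> -a /\ t <> 0 /\ t <> a /\ t <> b)).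
  { intros t. unfold C. simpl. intuition. }
  assert (PX : forall p q, -1 <= p -> p <= q -> q <= 1 ->
     (forall t, p < t < q -> ~ In t C /\ omega C t * (t + 1) < 0) ->
     RInt f p q <= PR e0 e1 e2 e3 e4 A q - PR e0 e1 e2 e3 e4 A p).
  { intros p q H1 H2 H3 H. rewrite <- RInt_PU. apply piece_le; auto.
    apply sub_int; auto. apply ex_RInt_pol. intros t Ht. destruct (H t Ht). apply UX; auto; lra. }
  assert (PY : forall p q, -1 <= p -> p <= q -> q <= 1 ->
     (forall t, p < t < q -> ~ In t C /\ omega C t * (t - 1) < 0) ->
     RInt f p q <= PR e0 e1 e2 e3 e4 (A + 2*K) q - PR e0 e1 e2 e3 e4 (A + 2*K) p).
  { intros p q H1 H2 H3 H. rewrite <- RInt_PU. apply piece_le; auto.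
    apply sub_int; auto. apply ex_RInt_pol. intros t Ht. destruct (H t Ht). apply UY; auto; lra. }
  assert (I1 := PX (-1) (-b) ltac:(lra) ltac:(lra) ltac:(lra)
     ltac:(intros t Ht; split; [apply Hn; lra|rewrite HWf; sg])).
  assert (I2 := PY (-b) (-a) ltac:(lra) ltac:(lra) ltac:(lra)
     ltac:(intros t Ht; split; [apply Hn; lra|rewrite HWf; sg])).
  assert (I3 := PX (-a) 0 ltac:(lra) ltac:(lra) ltac:(lra)
     ltac:(intros t Ht; split; [apply Hn; lra|rewrite HWf; sg])).
  assert (I4 := PY 0 a ltac:(lra) ltac:(lra) ltac:(lra)
     ltac:(intros t Ht; split; [apply Hn; lra|rewrite HWf; sg])).
  assert (I5 := PX a b ltac:(lra) ltac:(lra) ltac:(lra)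
     ltac:(intros t Ht; split; [apply Hn; lra|rewrite HWf; sg])).
  assert (I6 := PY b 1 ltac:(lra) ltac:(lra) ltac:(lra)
     ltac:(intros t Ht; split; [apply Hn; lra|rewrite HWf; sg])).
  assert (Hsum : RInt f (-1) 1 = RInt f (-1) (-b) + RInt f (-b) (-a) + RInt f (-a) 0
        + RInt f 0 a + RInt f a b + RInt f b 1).
  { rewrite (chas f (-1) (-b) 1) by (apply sub_int; [exact Hf|lra|lra|lra]).
    rewrite (chas f (-b) (-a) 1) by (apply sub_int; [exact Hf|lra|lra|lra]).
    rewrite (chas f (-a) 0 1) by (apply sub_int; [exact Hf|lra|lra|lra]).
    rewrite (chas f 0 a 1) by (apply sub_int; [exact Hf|lra|lra|lra]).
    rewrite (chas f a b 1) by (apply sub_int; [exact Hf|lra|lra|lra]). lra. }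
  assert (Vm1 : f (-1) = pol e0 e1 e2 e3 e4 0 (-1) - 8/15 * A).
  { assert (Hn1 : ~ In (-1) C) by (apply Hn; lra).
    rewrite (newtonF f C (-1) Hn1), <- NB_NF, HB, HW by auto. fold A. field. }
  assert (V1 : f 1 = pol e0 e1 e2 e3 e4 0 1 + 8/15 * (A + 2*K)).
  { assert (Hn1 : ~ In 1 C) by (apply Hn; lra).
    rewrite (newtonB f C 1 Hn1), HB, HW, HAK by auto. field. }
  assert (VC : forall c, In c C -> f c = pol e0 e1 e2 e3 e4 0 c).
  { intros c Hin. rewrite <- HB. symmetry. apply NB_interp; auto. }
  assert (V0 := VC 0 ltac:(unfold C; simpl; tauto)).
  assert (Vb := VC b ltac:(unfold C; simpl; tauto)).
  assert (Vmb := VC (-b) ltac:(unfold C; simpl; tauto)).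
  assert (Va := VC a ltac:(unfold C; simpl; tauto)).
  assert (Vma := VC (-a) ltac:(unfold C; simpl; tauto)).
  pose proof (alg1 a b D1 D2 D3 D4 D5 A K e0 e1 e2 e3 e4 Ha Hb eq_refl eq_refl eq_refl eq_refl eq_refl) as G1.
  pose proof (alg2 a b D1 D2 D3 D4 D5 A K e0 e1 e2 e3 e4 Ha Hb eq_refl eq_refl eq_refl eq_refl eq_refl) as G2.
  simpl in G1, G2.
  rewrite Vm1, V1, V0, Vb, Vmb, Va, Vma.
  split.
  - rewrite Hsum. assert (0 <= 82/10125 * K) by lra. lra.
  - assert (0 <= 8/225 * K) by lra. lra.
Qed.


Theorem proposition4 (f : R -> R) :
  m_convex 5 (fun x => -1 <= x <= 1) f ->
  RInt f (-1) 1 <=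
    2 / 5 * (1 / 3 * (f (-1) + 4 * f 0 + f 1))
    + 3 / 5 * (f (- (sqrt 3 / 3)) + f (sqrt 3 / 3))
  /\
  2 / 5 * (1 / 3 * (f (-1) + 4 * f 0 + f 1))
    + 3 / 5 * (f (- (sqrt 3 / 3)) + f (sqrt 3 / 3))
  <= 1 / 6 * (f (-1) + f 1)
     + 5 / 6 * (f (- (sqrt 5 / 5)) + f (sqrt 5 / 5)).
Proof. exact (main f). Qed.
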